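(* Let $G=(V,E)$ be a simple undirected graph, let $E^2=\{\{u,v\}\in\binom{V}{2}:\operatorname{dist}_G(u,v)\le 2\}$, and let $(\hat x,\hat y)$ with $\hat x\in\mathbb{Z}_+^{E^2}$ and $\hat y\in\{0,1\}^V$ be an integer point satisfying $$\frac{\sum_{i\in N_G(u)\cap N_G(v)}(1-\hat y_i)}{|N_G(u)\cap N_G(v)|}-\hat y_u-\hat y_v\le \hat x_{uv}\quad\text{for all }\{u,v\}\in E^2\setminus E.$$ Then $1-\hat y_u-\hat y_v-\hat y_i\le \hat x_{uv}$ for all $\{u,v\}\in E^2\setminus E$ and all $i\in N_G(u)\cap N_G(v)$.
   Context: $N_G(v)$ denotes the set of neighbors of $v$ in $G$ and $\operatorname{dist}_G$ the hop distance in $G$. For $\{u,v\}\in E^2\setminus E$ the vertices are at distance exactly $2$, so $N_G(u)\cap N_G(v)\neq\emptyset$. *)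

(* Defs.v *)
From mathcomp Require Import all_boot all_order all_algebra.
Set Implicit Arguments. Unset Strict Implicit. Unset Printing Implicit Defensive.
Import Order.TTheory GRing.Theory Num.Theory.

Definition simple_graph (T : finType) (e : rel T) : Prop :=
  symmetric e /\ irreflexive e.

Definition nbhd (T : finType) (e : rel T) (v : T) : {set T} := [set w | e v w].

(* {u,v} in E^2 \ E : distinct, non-adjacent, at distance exactly 2
   (i.e. with a common neighbour). *)
Definition dist2_nonedge (T : finType) (e : rel T) (u v : T) : bool :=
  [&& u != v, ~~ e u v & nbhd e u :&: nbhd e v != set0].

Definition b2q (b : bool) : rat := (b : nat)%:R.

(* Main.v *)
Require Import Defs.
From mathcomp Require Import all_boot all_order all_algebra.
From mathcomp Require Import lra.
Import Order.TTheory GRing.Theory Num.Theory.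
Local Open Scope ring_scope.

Theorem lemma2 (T : finType) (e : rel T) (x : T -> T -> nat) (y : T -> bool) :
  simple_graph e ->
  (forall u v, x u v = x v u) ->
  (forall u v, dist2_nonedge e u v ->
     (\sum_(i in nbhd e u :&: nbhd e v) (1 - b2q (y i)))
       / #|nbhd e u :&: nbhd e v|%:R - b2q (y u) - b2q (y v) <= (x u v)%:R) ->
  forall u v, dist2_nonedge e u v ->
  forall i, i \in nbhd e u :&: nbhd e v ->
    1 - b2q (y u) - b2q (y v) - b2q (y i) <= (x u v)%:R.
Proof.
move=> _ _ H u v Huv i Hi.
have Hx := H u v Huv.
have x0 : (0:rat) <= (x u v)%:R by rewrite ler0n.
rewrite /b2q in Hx *.
case Eu: (y u); case Ev: (y v); case Ei: (y i); rewrite /= ?Eu ?Ev /= in Hx *;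
  try (apply: le_trans x0; lra).
rewrite !subr0 in Hx *.
set S := nbhd e u :&: nbhd e v in Hx Hi.
have Hs : 1 <= \sum_(j in S) (1 - ((y j : nat)%:R : rat)).
  rewrite (bigD1 i) //= Ei /= subr0 lerDl.
  apply: sumr_ge0 => j _; case: (y j) => /=; by rewrite ?subrr ?subr0 ?ler01.
have Hn : (0:rat) < #|S|%:R.
  rewrite ltr0n; apply/card_gt0P; by exists i.
have Hp : 0 < (\sum_(j in S) (1 - ((y j : nat)%:R : rat))) / #|S|%:R.
  have H1 := lt_le_trans ltr01 Hs. by rewrite divr_gt0.
case: (x u v) Hx => [|n] Hx.
  by move: (lt_le_trans Hp Hx); rewrite ltxx.
by rewrite ler1n.
Qed.
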